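(* Let $1\le r<\infty$, $d\in\mathbb{N}$, $\varepsilon>0$. Let $a=\lceil(8/\varepsilon+3)^r\rceil$ and $M=\{k_j\}_{j=1}^\infty$ with $k_j=a^{j-1}$. Let $\bar m,\bar n\in[M]^d$ with $m_1<n_1<\dots<m_d<n_d$, let $k>n_d$, let $u=((a_s)_{s=1}^d,(b_s)_{s=1}^d,c)\in S_{\ell_\infty^{2d+1}}$, and let $F=(F_i)_{i=1}^k\colon S_{\ell_\infty^k}\to S_{\ell_r^k}$ be a step preserving function with $F_i(x(\bar m,u,k))=0$ for all $i\in(m_d,k]$. Then \[\|F(x(\bar m,u,k))-F(x(\bar n,u,k))\|_r>1-\varepsilon.\]
   Context: $S_{\ell_p^k}$ denotes the unit sphere of $(\mathbb{R}^k,\|\cdot\|_p)$. $[M]^d$ is the set of increasing $d$-tuples from $M$; $m_0=0$. $1_A\in\mathbb{R}^k$ is the indicator vector of $A$ and $1_{(a,b]}=1_{\{i:a<i\le b\}}$. With $P=2\mathbb{N}$ (even integers) and $P^c=\mathbb{N}\setminus P$: $x(\bar m,u,k)=\sum_{s=1}^da_s1_{(m_{s-1},m_s]\cap P}+\sum_{s=1}^db_s1_{(m_{s-1},m_s]\cap P^c}+c1_{(m_d,k]}$. $F$ is step preserving if for all $x$ and $i,j$, $x_i=x_j$ implies $F_i(x)=F_j(x)$. *)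

(* Defs.v *)
From HB Require Import structures.
From mathcomp Require Import all_boot all_order all_algebra.
From mathcomp Require Import reals exp.
Set Implicit Arguments. Unset Strict Implicit. Unset Printing Implicit Defensive.
Import Order.TTheory GRing.Theory Num.Theory.
Local Open Scope ring_scope.

Definition linf_norm (R : realType) (n : nat) (v : 'rV[R]_n) : R :=
  \big[Num.max/0]_(i < n) `|v 0 i|.

Definition lr_norm (R : realType) (r : R) (n : nat) (v : 'rV[R]_n) : R :=
  (\sum_(i < n) `|v 0 i| `^ r) `^ (r^-1).

Definition a_const (R : realType) (r eps : R) : nat :=
  `|Num.ceil ((8 / eps + 3) `^ r)|%N.

Definition inM (a m : nat) : Prop := exists j : nat, m = (a ^ j)%N.

(* tuples mbar are functions nat -> nat of which only the indices 1..d
   matter; mz m j is m_j with the convention m_0 = 0. *)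
Definition mz (m : nat -> nat) (j : nat) : nat := if j is 0 then 0%N else m j.

Definition in_Md (a d : nat) (m : nat -> nat) : Prop :=
  (forall s, (1 <= s <= d)%N -> inM a (m s)) /\
  (forall s, (1 <= s < d)%N -> (m s < m s.+1)%N).

(* u = ((a_s)_{s=1}^d, (b_s)_{s=1}^d, c) in R^(2d+1):
   a_s = u (s-1), b_s = u (d+s-1), c = u (2d)  (0-based coordinates).
   x(mbar,u,k) in R^k; coordinate i : 'I_k is the paper's coordinate i+1.
   P = even integers. *)
Definition xvec (R : realType) (d : nat) (m : nat -> nat)
    (u : 'rV[R]_(d + d + 1)) (k : nat) : 'rV[R]_k :=
  \row_(i < k)
    (\sum_(s < d)
        (if (mz m s < i.+1 <= m s.+1)%N && ~~ odd i.+1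
         then u 0 (lshift 1 (lshift d s)) else 0)
   + \sum_(s < d)
        (if (mz m s < i.+1 <= m s.+1)%N && odd i.+1
         then u 0 (lshift 1 (rshift d s)) else 0)
   + (if (mz m d < i.+1 <= k)%N then u 0 (rshift (d + d) (@ord0 0)) else 0)).

Definition step_preserving (R : realType) (k : nat) (F : 'rV[R]_k -> 'rV[R]_k) :=
  forall x : 'rV[R]_k, linf_norm x = 1 ->
    forall i j : 'I_k, x 0 i = x 0 j -> F x 0 i = F x 0 j.

(* Main.v *)
Require Import Defs.
From HB Require Import structures.
From mathcomp Require Import all_boot all_order all_algebra.
From mathcomp Require Import reals exp.
From mathcomp Require Import all_classical all_reals all_analysis.
From mathcomp Require Import zify ring lra.
Import Order.TTheory GRing.Theory Num.Theory.

Lemma count_par lo len p :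
  count (fun j => odd j == p) (iota lo len) = (len + (odd lo == p)) %/ 2.
Proof.
elim: len lo => [|len IH] lo /=.
  by case: (odd lo == p).
rewrite IH /= .
case: (odd lo) => /=; case: (p) => /=; lia.
Qed.

Lemma card_par k lo hi p : (lo <= hi <= k)%N ->
  (2 * #|[pred j : 'I_k | (lo <= j < hi) && (odd j == p)]| <= hi - lo + 1)%N /\
  (hi - lo <= 2 * #|[pred j : 'I_k | (lo <= j < hi) && (odd j == p)]| + 1)%N.
Proof.
move=> /andP[lh hk].
have -> : #|[pred j : 'I_k | (lo <= j < hi) && (odd j == p)]| =
          count (fun j => odd j == p) (iota lo (hi - lo)).
  rewrite -sum1_card.
  rewrite -(big_mkord (fun j => (lo <= j < hi) && (odd j == p)) (fun _ => 1%N)).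
  rewrite /index_iota subn0 sum1_count.
  have -> : k = (lo + (hi - lo) + (k - hi))%N by lia.
  rewrite !iotaD !count_cat add0n.
  rewrite (@eq_in_count _ _ pred0); last first.
    by move=> j; rewrite mem_iota /= => h; have -> : (lo <= j) = false by lia.
  rewrite (@eq_in_count _ _ pred0 (iota (0 + (lo + (hi - lo))) _)); last first.
    move=> j; rewrite mem_iota /= => /andP[h _].
    have hh : (j < hi) = false by lia.
    by rewrite hh !andbF.
  rewrite !count_pred0 addn0 add0n.
  apply: eq_in_count => j; rewrite mem_iota => /andP[h1 h2].
  by have -> : (lo <= j < hi)%N = true by lia.
rewrite count_par; split; case: (odd lo == p) => /=; lia.
Qed.

Lemma inM_pos a x : (0 < a)%N -> inM a x -> (0 < x)%N.
Proof. by move=> a0 [j ->]; rewrite expn_gt0 a0. Qed.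

Lemma inM_gap a x y : (2 <= a)%N -> inM a x -> inM a y -> (x < y)%N -> (a * x <= y)%N.
Proof.
move=> a2 [p ->] [p' ->] lt.
have a1 : (1 < a)%N by [].
rewrite ltn_exp2l // in lt.
by rewrite -expnS leq_exp2l.
Qed.

Section Mono.
Variables (a d : nat) (q : nat -> nat).
Hypothesis a2 : (2 <= a)%N.
Hypothesis hq : in_Md a d q.

Lemma mz_lt s : (s < d)%N -> (mz q s < mz q s.+1)%N.
Proof.
case: hq => hM hinc sd /=.
case: s sd => [|s] sd /=.
  by apply: (@inM_pos a); [exact: ltnW | apply: hM; lia].
by apply: hinc; lia.
Qed.

Lemma mz_mono s t : (s <= t <= d)%N -> (mz q s <= mz q t)%N.
Proof.
elim: t => [|t IH] /andP[st td].
  by have -> : s = 0%N by lia.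
case: (eqVneq s t.+1) => [->//|ne].
have h1 : (t < d)%N by lia.
apply: (leq_trans _ (ltnW (mz_lt _ h1))).
apply: IH; lia.
Qed.

Lemma mz_smono s t : (s < t <= d)%N -> (mz q s < mz q t)%N.
Proof.
move=> /andP[st td].
have h1 : (s < d)%N by lia.
apply: (leq_trans (mz_lt _ h1)).
apply: mz_mono; lia.
Qed.

Lemma block_ex x : (x < mz q d)%N -> exists2 s, (s < d)%N & (mz q s <= x < mz q s.+1)%N.
Proof.
have : (d <= d)%N by [].
elim: {-2}d => [|t IH] td xt; first by [].
case: (ltnP x (mz q t)) => h.
  by case: (IH (ltnW td) h) => s s1 s2; exists s => //; lia.
by exists t => //; rewrite h.
Qed.

Lemma same_block s i j : (s < d)%N -> (mz q s <= i < mz q s.+1)%N ->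
  (mz q s <= j < mz q s.+1)%N ->
  forall t, (t <= d)%N -> (i < mz q t) = (j < mz q t).
Proof.
move=> sd hi hj t td.
case: (leqP t s) => ts.
  have := @mz_mono t s; lia.
have := @mz_mono s.+1 t; lia.
Qed.

End Mono.

Local Open Scope ring_scope.

Lemma mink (R : realType) (p : R) (n : nat) (v w : nat -> R) : 1 <= p ->
  (\sum_(i < n) `|v i + w i| `^ p) `^ p^-1 <=
  (\sum_(i < n) `|v i| `^ p) `^ p^-1 + (\sum_(i < n) `|w i| `^ p) `^ p^-1.
Proof.
move=> p1.
have p0 : 0 < p by rewrite (lt_le_trans _ p1).
pose f (u : nat -> R) i : R := if (i < n)%N then u i else 0.
have mf u : measurable_fun setT (f u) by [].
have := minkowski_EFin counting (mf v) (mf w) p1.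
have E u : Lnorm counting p%:E (EFin \o f u) = ((\sum_(i < n) `|u i| `^ p) `^ p^-1)%:E.
  rewrite Lnorm_counting//.
  rewrite (nneseries_split 0 n); last by move=> k; rewrite lee_fin powR_ge0.
  rewrite add0n eseries0 ?adde0; last first.
    by move=> i ni _ /=; rewrite /f ltnNge ni /= normr0 powR0// gt_eqF.
  rewrite big_mkord -poweR_EFin; congr (_ `^ _)%E.
  rewrite -sumEFin; apply: eq_bigr => i _ /=; rewrite /f ltn_ord.
  by [].
have -> : (f v \+ f w) = f (fun i => v i + w i).
  by apply/funext => i; rewrite /f /=; case: ifP => //; rewrite addr0.
by rewrite !E lee_fin.
Qed.

Definition Erel (d : nat) (q : nat -> nat) {k : nat} (i j : 'I_k) : bool :=
  (odd i == odd j) && [forall t : 'I_(d.+1), ((i < mz q t)%N == (j < mz q t)%N)].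

Lemma ErelP d q k (i j : 'I_k) : Erel d q i j ->
  odd i = odd j /\ forall t, (t <= d)%N -> (i < mz q t)%N = (j < mz q t)%N.
Proof.
move=> /andP[/eqP o /forallP H]; split => // t td.
have td1 : (t < d.+1)%N by []. by have := H (Ordinal td1) => /eqP.
Qed.

Lemma xvec_E (R : realType) d q k (u : 'rV[R]_(d + d + 1)) (i j : 'I_k) :
  Erel d q i j -> xvec q u k 0 i = xvec q u k 0 j.
Proof.
case/ErelP => o H.
have C t : (t <= d)%N -> (mz q t < i.+1)%N = (mz q t < j.+1)%N.
  by move=> td; rewrite !ltnS (leqNgt _ i) (leqNgt _ j) H.
rewrite !mxE !oddS o !ltn_ord !andbT C //.
congr (_ + _ + _); apply: eq_bigr => s _.
  rewrite C ?(ltnW (ltn_ord s)) //.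
  by have := H s.+1 (ltn_ord s); rewrite /= ltnS => ->.
rewrite C ?(ltnW (ltn_ord s)) //.
by have := H s.+1 (ltn_ord s); rewrite /= ltnS => ->.
Qed.

Section Val.
Variables (a d : nat) (q : nat -> nat).
Hypothesis a2 : (2 <= a)%N.
Hypothesis hq : in_Md a d q.
Variables (R : realType) (k : nat) (u : 'rV[R]_(d + d + 1)).

Lemma xvec_block (s : 'I_d) (i : 'I_k) : (mz q s <= i < mz q s.+1)%N ->
  xvec q u k 0 i = if odd i then u 0 (lshift 1 (lshift d s)) else u 0 (lshift 1 (rshift d s)).
Proof.
move=> hi; rewrite /= in hi.
have other (s' : 'I_d) : s' != s -> (mz q s' < i.+1 <= q s'.+1)%N = false.
  move=> ne; rewrite ltnS.
  case: (ltngtP s' s) => c; last by move: ne => /eqP []; apply: val_inj.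
    have := @mz_mono a d q a2 hq (s'.+1) (s) => /=; have := ltn_ord s; lia.
  have := @mz_mono a d q a2 hq (s.+1) (s') => /=; have := ltn_ord s'; lia.
have tl : (mz q d < i.+1 <= k)%N = false.
  have := @mz_mono a d q a2 hq (s.+1) (d) => /=; have := ltn_ord s; lia.
have single (P : bool) (c : 'I_d -> R) :
  \sum_(s0 < d) (if (mz q s0 < i.+1 <= q s0.+1)%N && P then c s0 else 0) = (if P then c s else 0).
  rewrite (bigD1 s) //= big1 ?addr0; first by rewrite ltnS hi.
  by move=> s0 ne; rewrite other.
rewrite mxE tl addr0 !single oddS negbK.
by case: (odd i); rewrite ?addr0 ?add0r.
Qed.

Lemma xvec_tail (i : 'I_k) : (mz q d <= i)%N ->
  xvec q u k 0 i = u 0 (rshift (d + d) (@ord0 0)).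
Proof.
move=> hi; rewrite /= in hi.
have other (s' : 'I_d) : (mz q s' < i.+1 <= q s'.+1)%N = false.
  have := @mz_mono a d q a2 hq (s'.+1) (d) => /=; have := ltn_ord s'; lia.
rewrite mxE !big1 ?add0r; try by move=> s' _; rewrite other.
by rewrite ltnS hi ltn_ord.
Qed.

End Val.

Lemma dc (R : realType) k (E : rel 'I_k) (h : 'I_k -> R) (X Y : pred 'I_k) (c : R) :
  (forall i, E i i) -> (forall i j, E i j -> E j i) ->
  (forall i j l, E i j -> E j l -> E i l) ->
  (forall i j, E i j -> h i = h j) -> (forall i, 0 <= h i) -> 0 <= c ->
  (forall i, X i -> c * (#|[pred j | E i j && X j]|)%:R <= (#|[pred j | E i j && Y j]|)%:R) ->
  c * \sum_(i | X i) h i <= \sum_(j | Y j) h j.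
Proof.
move=> Er Es Et Eh h0 c0 H.
pose nX i : R := (#|[pred j | E i j && X j]|)%:R.
have nXE i j : E i j -> nX i = nX j.
  move=> eij; rewrite /nX; congr (_%:R); apply: eq_card => l; rewrite !inE /=.
  apply/idP/idP => /andP[e xl]; rewrite xl andbT; [exact: Et (Es _ _ eij) e | exact: Et eij e].
have nXpos i : X i -> 0 < nX i.
  move=> xi; rewrite /nX ltr0n; apply/card_gt0P; exists i; by rewrite inE /= Er xi.
have cardS i (P : pred 'I_k) : (#|[pred j | E i j && P j]|)%:R = \sum_(j | P j) (if E i j then 1 else 0 : R).
  rewrite -sum1_card natr_sum big_mkcond [RHS]big_mkcond /=; apply: eq_bigr => j _.
  by rewrite inE /=; case: (E i j); case: (P j).
rewrite mulr_sumr.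
apply: (@le_trans _ _ (\sum_(i | X i) \sum_(j | Y j) (if E i j then h j / nX i else 0))).
  apply: ler_sum => i xi.
  have hn := nXpos i xi.
  have -> : \sum_(j | Y j) (if E i j then h j / nX i else 0) =
            h i / nX i * (#|[pred j | E i j && Y j]|)%:R.
    rewrite cardS mulr_sumr; apply: eq_bigr => j _.
    by case: ifP => e; rewrite ?mulr1 ?mulr0 // (Eh _ _ e).
  rewrite -mulrA [c * _]mulrC ler_wpM2l ?h0 // mulrC ler_pdivlMr // mulrC.
  by rewrite mulrC; exact: H.
rewrite exchange_big /=.
apply: ler_sum => j yj.
have -> : \sum_(i | X i) (if E i j then h j / nX i else 0) = h j / nX j * nX j.
  rewrite [in RHS in _ * RHS]/nX cardS mulr_sumr; apply: eq_bigr => i _.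
  case: ifP => e; last by rewrite ifF ?mulr0 //; apply/negP => /Es; rewrite e.
  by rewrite (Es _ _ e) mulr1 (nXE _ _ e).
have [z|nz] := eqVneq (nX j) 0; first by rewrite z mulr0 h0.
by rewrite divfK.
Qed.

Lemma linf_le (R : realType) k (x : 'rV[R]_k) (j : 'I_k) : `|x 0 j| <= linf_norm x.
Proof. by rewrite /linf_norm (bigD1 j) //= le_max lexx. Qed.

Lemma linf_ub (R : realType) k (x : 'rV[R]_k) (c : R) : 0 <= c ->
  (forall j, `|x 0 j| <= c) -> linf_norm x <= c.
Proof.
move=> c0 H; rewrite /linf_norm; apply: (big_ind (fun v => v <= c)) => //.
by move=> v w hv hw; rewrite ge_max hv hw.
Qed.

Lemma linf_attain (R : realType) k (x : 'rV[R]_k) : linf_norm x = 1 ->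
  exists j, `|x 0 j| = 1.
Proof.
move=> h1.
case: (pickP (fun j => `|x 0 j| == 1)) => [j /eqP hj|hne]; first by exists j.
have : linf_norm x < 1.
  rewrite /linf_norm; apply: (big_ind (fun v => v < 1)) => //.
    by move=> v w hv hw; rewrite gt_max hv hw.
  move=> j _; rewrite lt_neqAle hne /= -h1; exact: linf_le.
by rewrite h1 ltxx.
Qed.

Local Close Scope ring_scope.

Lemma ErelI d q k (i j : 'I_k) : odd i = odd j ->
  (forall t, (t <= d)%N -> (i < mz q t)%N = (j < mz q t)%N) -> Erel d q i j.
Proof.
move=> o H; rewrite /Erel o eqxx /=; apply/forallP => t; apply/eqP; apply: H.
by rewrite -ltnS ltn_ord.
Qed.

Lemma Erel_refl d q k (i : 'I_k) : Erel d q i i.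
Proof. by apply: ErelI. Qed.

Lemma Erel_sym d q k (i j : 'I_k) : Erel d q i j -> Erel d q j i.
Proof. by case/ErelP => o H; apply: ErelI => // t td; rewrite H. Qed.

Lemma Erel_trans d q k (i j l : 'I_k) : Erel d q i j -> Erel d q j l -> Erel d q i l.
Proof.
case/ErelP => o H; case/ErelP => o' H'; apply: ErelI; first by rewrite o.
by move=> t td; rewrite H // H'.
Qed.

Lemma mzS q t : (0 < t)%N -> mz q t = q t.
Proof. by case: t. Qed.

Lemma mz_le q t : (mz q t <= q t)%N.
Proof. by case: t. Qed.

Definition Bset (d : nat) (m n : nat -> nat) (j : nat) : bool :=
  [exists s : 'I_d, (mz n s <= j)%N && (j < m s.+1)%N].

Section Count.
Variables (a d k : nat) (m n : nat -> nat).
Hypotheses (a4 : (4 <= a)%N) (hm : in_Md a d m) (hn : in_Md a d n)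
 (hmn : forall s, (1 <= s <= d)%N -> (m s < n s)%N)
 (hnm : forall s, (1 <= s < d)%N -> (n s < m s.+1)%N) (hnk : (n d < k)%N).

Let a2 : (2 <= a)%N. Proof. by lia. Qed.

Lemma gap_nm s : (1 <= s < d)%N -> (a * n s <= m s.+1)%N.
Proof.
move=> h; apply: inM_gap => //; [apply: hn.1 | apply: hm.1 | exact: hnm]; lia.
Qed.

Lemma gap_mn s : (s < d)%N -> (a * m s.+1 <= n s.+1)%N.
Proof.
move=> h; apply: inM_gap => //; [apply: hm.1 | apply: hn.1 | apply: hmn]; lia.
Qed.

Lemma mpos s : (1 <= s <= d)%N -> (0 < m s)%N.
Proof. by move=> h; apply: (@inM_pos a); [lia | apply: hm.1]. Qed.

Lemma npos s : (1 <= s <= d)%N -> (0 < n s)%N.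
Proof. by move=> h; apply: (@inM_pos a); [lia | apply: hn.1]. Qed.

Lemma m_gt_nz s : (s < d)%N -> (mz n s < m s.+1)%N.
Proof.
case: s => [|s] h /=; first by apply: mpos; lia.
by apply: hnm; lia.
Qed.

Lemma Bchar s j : (s < d)%N -> (mz n s <= j < n s.+1)%N -> Bset d m n j = (j < m s.+1)%N.
Proof.
move=> sd hj; apply/existsP/idP => [[s' /andP[h1 h2]] | h].
  have s'd := ltn_ord s'.
  case: (leqP s' s) => c.
    have := @mz_mono a d m a2 hm s'.+1 s.+1 => /=; lia.
  have := @mz_mono a d n a2 hn s.+1 s' => /=; lia.
exists (Ordinal sd); rewrite /= h andbT; lia.
Qed.

Lemma count_f (i : 'I_k) : (i < mz m d)%N -> ~~ Bset d m n i ->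
  ((a - 2) * #|[pred j : 'I_k | Erel d m i j && ((j < mz m d)%N && ~~ Bset d m n j)]|
    <= #|[pred j : 'I_k | Erel d m i j && Bset d m n j]|)%N.
Proof.
move=> iA iB.
case: (@block_ex a d m a2 _ iA) => s sd /andP[i1 i2].
have iN : (i < mz n s)%N.
  rewrite ltnNge; apply: contra iB => h; apply/existsP; exists (Ordinal sd).
  by rewrite /= h.
have s1 : (0 < s)%N by move: iN; case: (s).
have mzn : mz n s = n s by case: (s) s1.
have mzm : mz m s = m s by case: (s) s1.
rewrite mzn in iN; rewrite mzm in i1; rewrite /= in i2.
have ms := mpos s; have ns := npos s; have gp := gap_nm s.
have hmn' := hmn s. have hnm' := hnm s.
have mk : (m s.+1 < k)%N.
  have mzd : mz m d = m d by rewrite mzS //; lia.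
  have := @mz_mono a d m a2 hm s.+1 d; rewrite mzd /= => h.
  have := hmn d; lia.
set X := [pred j : 'I_k | _].
set Y := [pred j : 'I_k | _].
have sX : (#|X| <= #|[pred j : 'I_k | (m s <= j < n s)%N && (odd j == odd i)]|)%N.
  apply: subset_leq_card; apply/fintype.subsetP => j; rewrite !inE => /andP[/ErelP[od H] /andP[jA jB]].
  have h1 := H s (ltnW sd); have h2 := H s.+1 sd.
  rewrite mzm in h1; rewrite /= in h2.
  have jm : (j < m s.+1)%N by rewrite -h2.
  have jn : (j < n s)%N.
    rewrite ltnNge; apply: contra jB => h; apply/existsP; exists (Ordinal sd).
    by rewrite /= mzn h.
  rewrite od eqxx andbT jn andbT leqNgt -h1; lia.
have sY : (#|[pred j : 'I_k | (n s <= j < m s.+1)%N && (odd j == odd i)]| <= #|Y|)%N.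
  apply: subset_leq_card; apply/fintype.subsetP => j; rewrite !inE => /andP[jr /eqP od].
  apply/andP; split.
    apply: ErelI => //.
    apply: (@same_block a d m a2 hm s i j sd); rewrite ?mzm /=; lia.
  by apply/existsP; exists (Ordinal sd); rewrite /= mzn.
have [cX _] := @card_par k (m s) (n s) (odd i) ltac:(lia).
have [_ cY] := @card_par k (n s) (m s.+1) (odd i) ltac:(lia).
nia.
Qed.

Lemma count_g (i : 'I_k) : Bset d m n i ->
  ((a - 2) * #|[pred j : 'I_k | Erel d n i j && Bset d m n j]|
    <= 2 * #|[pred j : 'I_k | Erel d n i j && ~~ Bset d m n j]|)%N.
Proof.
case/existsP => s /andP[i1 i2].
have sd := ltn_ord s.
have gp := @gap_mn s sd.
have mp : (0 < m s.+1)%N by apply: mpos; lia.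
have mnz := @m_gt_nz s sd.
have nk : (n s.+1 < k)%N.
  have := @mz_mono a d n a2 hn s.+1 d => /=.
  have mzd : mz n d = n d by rewrite mzS //; lia.
  rewrite mzd; lia.
have hmn1 := hmn s.+1.
have iN : (mz n s <= i < mz n s.+1)%N by rewrite /=; lia.
set X := [pred j : 'I_k | _].
set Y := [pred j : 'I_k | _].
have sX : (#|X| <= #|[pred j : 'I_k | (mz n s <= j < m s.+1)%N && (odd j == odd i)]|)%N.
  apply: subset_leq_card; apply/fintype.subsetP => j; rewrite !inE => /andP[/ErelP[od H] jB].
  have h1 := H s (ltnW sd); have h2 := H s.+1 sd.
  rewrite /= in h2.
  have jb : (mz n s <= j < n s.+1)%N.
    rewrite -h2 leqNgt -h1; lia.
  rewrite (@Bchar s j sd jb) in jB.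
  rewrite od eqxx andbT jB andbT; lia.
have sY : (#|[pred j : 'I_k | (m s.+1 <= j < n s.+1)%N && (odd j == odd i)]| <= #|Y|)%N.
  apply: subset_leq_card; apply/fintype.subsetP => j; rewrite !inE => /andP[jr /eqP od].
  have jb : (mz n s <= j < n s.+1)%N by lia.
  apply/andP; split.
    apply: ErelI => //.
    exact: (@same_block a d n a2 hn s i j sd iN).
  by rewrite (@Bchar s j sd jb) -leqNgt; lia.
have [cX _] := @card_par k (mz n s) (m s.+1) (odd i) ltac:(lia).
have [_ cY] := @card_par k (m s.+1) (n s.+1) (odd i) ltac:(lia).
nia.
Qed.

Lemma xn_sphere (R : realType) (u : 'rV[R]_(d + d + 1)) :
  linf_norm u = 1%R -> linf_norm (xvec m u k) = 1%R -> linf_norm (xvec n u k) = 1%R.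
Proof.
move=> hu hx.
apply/eqP; rewrite eq_le; apply/andP; split.
  apply: linf_ub => // j.
  case: (ltnP j (mz n d)) => hj.
    case: (@block_ex a d n a2 _ hj) => s sd hb.
    rewrite (@xvec_block a d n a2 hn R k u (Ordinal sd) j hb).
    by case: (odd j); rewrite -hu; apply: linf_le.
  by rewrite (@xvec_tail a d n a2 hn R k u j hj) -hu; apply: linf_le.
case: (@linf_attain R k _ hx) => i hi.
case: (ltnP i (mz m d)) => iA.
  case: (@block_ex a d m a2 _ iA) => s sd hb.
  rewrite (@xvec_block a d m a2 hm R k u (Ordinal sd) i hb) in hi.
  have gp := @gap_mn s sd.
  have mp : (0 < m s.+1)%N by apply: mpos; lia.
  have mnz := @m_gt_nz s sd.
  have nk : (n s.+1 < k)%N.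
    have := @mz_mono a d n a2 hn s.+1 d => /=.
    have mzd : mz n d = n d by rewrite mzS //; lia.
    rewrite mzd; lia.
  pose j0 := if odd (n s.+1 - 1) == odd i then (n s.+1 - 1)%N else (n s.+1 - 2)%N.
  have j0k : (j0 < k)%N by rewrite /j0; case: ifP => _; lia.
  have j0o : odd j0 = odd i.
    rewrite /j0; case: ifP => [/eqP //|/negbT].
    have -> : (n s.+1 - 1 = (n s.+1 - 2).+1)%N by lia.
    by rewrite oddS; case: (odd i); case: (odd _).
  have j0b : (mz n (Ordinal sd) <= Ordinal j0k < mz n (Ordinal sd).+1)%N.
    rewrite /= /j0; case: ifP => _; nia.
  apply: le_trans (@linf_le R k _ (Ordinal j0k)).
  rewrite (@xvec_block a d n a2 hn R k u (Ordinal sd) (Ordinal j0k) j0b) /= j0o.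
  by rewrite hi.
have km : (k.-1 < k)%N by rewrite ltn_predL; lia.
have hj : (mz n d <= (Ordinal km : 'I_k))%N.
  have := mz_le n d; rewrite /=; lia.
apply: le_trans (@linf_le R k _ (Ordinal km)).
rewrite (@xvec_tail a d n a2 hn R k u _ hj).
by rewrite (@xvec_tail a d m a2 hm R k u i iA) in hi; rewrite hi.
Qed.

End Count.

Local Open Scope ring_scope.

Lemma fact_f (R : realType) (A X al : R) : (A - 2) * X <= al -> al + X = 1 ->
  (1 - al) * (A - 1) <= 1.
Proof.
move=> h e.
have hX : X = 1 - al by lra.
rewrite hX in h.
have -> : (1 - al) * (A - 1) = (A - 2) * (1 - al) + (1 - al) by ring.
lra.
Qed.

Lemma fact_g (R : realType) (A be Y : R) : (A - 2) / 2 * be <= Y -> be + Y = 1 ->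
  be * A <= 2.
Proof.
move=> h e.
have hY : Y = 1 - be by lra.
rewrite hY in h.
have -> : be * A = 2 * ((A - 2) / 2 * be) + 2 * be by field.
lra.
Qed.

Lemma final_num (R : realType) (r eps K al be L a : R) : 1 <= r -> 0 < eps ->
  K = 8 / eps + 3 -> K `^ r <= a -> 4 <= a ->
  (1 - al) * (a - 1) <= 1 -> be * a <= 2 -> 0 <= be -> al <= 1 ->
  al `^ r^-1 - be `^ r^-1 <= L -> 1 - eps < L.
Proof.
move=> r1 eps0 KE aK a4 fact1 fact2 be0 al1 mk.
have r0 : 0 < r by apply: lt_le_trans r1.
have rn0 : r != 0 by rewrite gt_eqF.
have rinv0 : 0 <= r^-1 by rewrite invr_ge0 ltW.
have K3 : 3 < K by rewrite KE ltrDr divr_gt0.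
have K0 : 0 < K by lra.
have KK : K <= K `^ r by apply: le1r_powR => //; lra.
have aKK : K <= a by apply: le_trans aK.
have alpos : 0 < al.
  have : (1 - al) * 3 <= (1 - al) * (a - 1) by rewrite ler_wpM2l; lra.
  lra.
have h1 : al <= al `^ r^-1.
  by apply: ger1_powR; [rewrite alpos al1 | rewrite invf_le1].
have hz : be `^ r^-1 <= 2 / K.
  have P0 : 0 < K `^ r := powR_gt0 _ K0.
  have hb : be <= (2 / K) `^ r.
    have eq : (2 / K) `^ r = 2 `^ r / K `^ r.
      rewrite powRM ?invr_ge0 ?(ltW K0) //; congr (_ * _).
      by rewrite -powR_inv1 ?(ltW K0) // -powRrM mulN1r powRN.
    rewrite eq.
    have h2 : 2 <= 2 `^ r by apply: le1r_powR => //; lra.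
    have a0 : 0 < a by lra.
    apply: (@le_trans _ _ (2 / a)).
      by rewrite ler_pdivlMr.
    apply: (@le_trans _ _ (2 / K `^ r)).
      by rewrite ler_pM2l // lef_pV2 // posrE.
    by rewrite ler_wpM2r // invr_ge0 ltW.
  have := ge0_ler_powR rinv0 _ _ hb.
  rewrite -powRrM mulfV // powRr1 ?divr_ge0 ?(ltW K0) //; apply.
    by rewrite nnegrE.
  by rewrite nnegrE powR_ge0.
have main : al - 2 / K <= L by lra.
set t := 1 - al.
have t0 : 0 <= t by rewrite /t; lra.
have tK : t * (K - 1) <= 1.
  apply: le_trans fact1; rewrite -/t ler_wpM2l //; lra.
have Ke : K * eps = 8 + 3 * eps by rewrite KE mulrDl divfK ?gt_eqF.
have h3 : t * (8 + 2 * eps) <= eps.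
  have -> : 8 + 2 * eps = (K - 1) * eps by rewrite mulrBl Ke mul1r; ring.
  by rewrite mulrA ger_pMl.
have te : 0 <= t * eps by apply: mulr_ge0 => //; apply: ltW.
set z := 2 / K.
have zK : z * K = 2 by rewrite /z divfK ?gt_eqF.
have z0 : 0 <= z by rewrite /z divr_ge0 // (ltW K0).
have ze : 0 <= z * eps by apply: mulr_ge0 => //; apply: ltW.
have h4 : z * (8 + 3 * eps) = 2 * eps by rewrite -Ke mulrA zK.
have main' : al - z <= L := main.
have ht : t = 1 - al by [].
clearbody z t.
have h5 : 8 * t <= eps.
  have e5 : t * (8 + 2 * eps) = 8 * t + 2 * (t * eps) by ring.
  lra.
have h6 : 8 * z <= 2 * eps.
  have e6 : z * (8 + 3 * eps) = 8 * z + 3 * (z * eps) by ring.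
  lra.
lra.
Qed.

Lemma mink_ord (R : realType) (p : R) (k : nat) (v w : 'I_k -> R) : 1 <= p ->
  (\sum_(i < k) `|v i + w i| `^ p) `^ p^-1 <=
  (\sum_(i < k) `|v i| `^ p) `^ p^-1 + (\sum_(i < k) `|w i| `^ p) `^ p^-1.
Proof.
move=> p1.
pose conv (h : 'I_k -> R) (i : nat) : R := if insub i is Some j then h j else 0.
have := @mink R p k (conv v) (conv w) p1.
have E (h : 'I_k -> R) : \sum_(i < k) `|conv h i| `^ p = \sum_(i < k) `|h i| `^ p.
  by apply: eq_bigr => i _; rewrite /conv valK.
have E2 : \sum_(i < k) `|conv v i + conv w i| `^ p = \sum_(i < k) `|v i + w i| `^ p.
  by apply: eq_bigr => i _; rewrite /conv valK.
by rewrite E2 !E.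
Qed.

Theorem proposition3p5 (R : realType) (r : R) (d : nat) (eps : R)
    (m n : nat -> nat) (k : nat) (u : 'rV[R]_(d + d + 1))
    (F : 'rV[R]_k -> 'rV[R]_k) :
  1 <= r -> 0 < eps ->
  in_Md (a_const r eps) d m -> in_Md (a_const r eps) d n ->
  (forall s, (1 <= s <= d)%N -> (m s < n s)%N) ->
  (forall s, (1 <= s < d)%N -> (n s < m s.+1)%N) ->
  (n d < k)%N ->
  linf_norm u = 1 ->
  (forall x : 'rV[R]_k, linf_norm x = 1 -> lr_norm r (F x) = 1) ->
  step_preserving F ->
  (* well-definedness of F(x(mbar,u,k)): the point lies in S_{l_inf^k} *)
  linf_norm (xvec m u k) = 1 ->
  (forall i : 'I_k, (mz m d < i.+1)%N -> F (xvec m u k) 0 i = 0) ->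
  lr_norm r (F (xvec m u k) - F (xvec n u k)) > 1 - eps.
Proof.
move=> r1 eps0 hm hn hmn hnm hnk hu HF Hsp hxm Hf0.
have r0 : 0 < r by apply: lt_le_trans r1.
have rn0 : r != 0 by rewrite gt_eqF.
set a := a_const r eps.
pose K : R := 8 / eps + 3.
have K3 : 3 < K by rewrite /K ltrDr divr_gt0.
have aK : K `^ r <= a%:R.
  rewrite /a /a_const natr_absz ger0_norm ?ceil_ge // ceil_ge0.
  by apply: (lt_le_trans _ (powR_ge0 _ _)); rewrite ltrN10.
have KK : K <= K `^ r by apply: le1r_powR => //; lra.
have aKK : K <= a%:R := le_trans KK aK.
have a4 : (4 <= a)%N.
  have : (3 : R) < a%:R by apply: lt_le_trans aKK.
  by rewrite ltr_nat.
have a2 : (2 <= a)%N by lia.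
set f := F (xvec m u k).
set g := F (xvec n u k).
have hxn := @xn_sphere a d k m n a4 hm hn hmn hnm hnk R u hu hxm.
have fE i j : Erel d m i j -> f 0 i = f 0 j.
  by move=> e; apply: (Hsp _ hxm); apply: xvec_E.
have gE i j : Erel d n i j -> g 0 i = g 0 j.
  by move=> e; apply: (Hsp _ hxn); apply: xvec_E.
have sum1 (v : 'rV[R]_k) : lr_norm r v = 1 -> \sum_(i < k) `|v 0 i| `^ r = 1.
  move=> h.
  have S0 : 0 <= \sum_(i < k) `|v 0 i| `^ r by apply: sumr_ge0 => i _; apply: powR_ge0.
  have e : (\sum_(i < k) `|v 0 i| `^ r) `^ (r^-1 * r) = 1.
    by rewrite powRrM; move: h; rewrite /lr_norm => ->; rewrite powR1.
  by rewrite mulVf // powRr1 in e.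
have Sf := sum1 _ (HF _ hxm).
have Sg := sum1 _ (HF _ hxn).
pose B := Bset d m n.
pose hf (i : 'I_k) := `|f 0 i| `^ r.
pose hg (i : 'I_k) := `|g 0 i| `^ r.
pose XA := fun i : 'I_k => (i < mz m d)%N && ~~ B i.
have dcf : (a - 2)%N%:R * \sum_(i | XA i) hf i <= \sum_(j : 'I_k | B j) hf j.
  apply: (@dc R k (Erel d m) hf XA (fun j : 'I_k => B j)).
  - exact: Erel_refl.
  - exact: Erel_sym.
  - exact: Erel_trans.
  - by move=> i j e; rewrite /hf (fE i j e).
  - by move=> i; apply: powR_ge0.
  - exact: ler0n.
  - move=> i /andP[iA iB]; rewrite -natrM ler_nat.
    exact: (@count_f a d k m n a4 hm hn hmn hnm hnk i iA iB).
have dcg : ((a - 2)%N%:R / 2) * \sum_(i : 'I_k | B i) hg i <= \sum_(j : 'I_k | ~~ B j) hg j.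
  apply: (@dc R k (Erel d n) hg (fun j : 'I_k => B j) (fun j : 'I_k => ~~ B j)).
  - exact: Erel_refl.
  - exact: Erel_sym.
  - exact: Erel_trans.
  - by move=> i j e; rewrite /hg (gE i j e).
  - by move=> i; apply: powR_ge0.
  - by apply: divr_ge0; apply: ler0n.
  - move=> i iB.
    have := @count_g a d k m n a4 hm hn hmn hnm hnk i iB.
    rewrite -(ler_nat R) !natrM => h.
    rewrite mulrAC ler_pdivrMr // mulrC.
    by rewrite mulrC [X in _ <= X]mulrC.
have Sf_split : \sum_(j : 'I_k | B j) hf j + \sum_(i | XA i) hf i = 1.
  rewrite -Sf (bigID (fun j : 'I_k => B j) predT) /=; congr (_ + _).
  rewrite big_mkcond [RHS]big_mkcond /=; apply: eq_bigr => i _.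
  rewrite /XA; case: (B i) => /=; rewrite ?andbF //.
  case: ltnP => // hi; rewrite /hf Hf0 ?normr0 ?powR0 //; lia.
have Sg_split : \sum_(j : 'I_k | B j) hg j + \sum_(i : 'I_k | ~~ B i) hg i = 1.
  by rewrite -Sg (bigID (fun j : 'I_k => B j) predT) /=.
set al := \sum_(j : 'I_k | B j) hf j.
set X := \sum_(i | XA i) hf i.
set be := \sum_(j : 'I_k | B j) hg j.
set Y := \sum_(i : 'I_k | ~~ B i) hg i.
have X0 : 0 <= X by apply: sumr_ge0 => i _; apply: powR_ge0.
have be0 : 0 <= be by apply: sumr_ge0 => i _; apply: powR_ge0.
have Y0 : 0 <= Y by apply: sumr_ge0 => i _; apply: powR_ge0.
have A2 : (a - 2)%N%:R = a%:R - 2 :> R by rewrite natrB.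
rewrite A2 in dcf dcg.
have a4R : 4 <= a%:R :> R by rewrite ler_nat.
have dcf' : (a%:R - 2) * X <= al by exact: dcf.
have dcg' : (a%:R - 2) / 2 * be <= Y by exact: dcg.
have Sf' : al + X = 1 by exact: Sf_split.
have Sg' : be + Y = 1 by exact: Sg_split.
have fact1 : (1 - al) * (a%:R - 1) <= 1 := @fact_f R _ _ _ dcf' Sf'.
have fact2 : be * a%:R <= 2 := @fact_g R _ _ _ dcg' Sg'.
pose fB (i : 'I_k) := if B i then f 0 i else 0.
pose gB (i : 'I_k) := if B i then g 0 i else 0.
have mk := @mink_ord R r k (fun i => fB i - gB i) gB r1.
have e1 : \sum_(i < k) `|fB i - gB i + gB i| `^ r = al.
  rewrite /al [RHS]big_mkcond /=; apply: eq_bigr => i _; rewrite subrK /fB /hf.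
  by case: (B i) => //; rewrite normr0 powR0.
have e2 : \sum_(i < k) `|gB i| `^ r = be.
  rewrite /be [RHS]big_mkcond /=; apply: eq_bigr => i _; rewrite /gB /hg.
  by case: (B i) => //; rewrite normr0 powR0.
have e3 : (\sum_(i < k) `|fB i - gB i| `^ r) `^ r^-1 <= lr_norm r (f - g).
  rewrite /lr_norm; apply: ge0_ler_powR.
  - by rewrite invr_ge0 ltW.
  - by rewrite nnegrE; apply: sumr_ge0 => i _; apply: powR_ge0.
  - by rewrite nnegrE; apply: sumr_ge0 => i _; apply: powR_ge0.
  apply: ler_sum => i _; rewrite !mxE /fB /gB.
  by case: (B i) => //; rewrite subr0 normr0 powR0 // powR_ge0.
rewrite e1 e2 in mk.
have al1 : al <= 1.
  by rewrite -Sf' lerDl.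
apply: (@final_num R r eps K al be _ a%:R r1 eps0 (erefl K) aK a4R fact1 fact2 be0 al1).
apply: (le_trans _ e3); rewrite lerBlDr; exact: mk.
Qed.
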